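(* Let $n$ be an integer with $|n|\ne 1$, $n\neq 0$, and let $\{a,b,c,d\}$ be a set of positive integers with the property $D(n)$ such that $n^2\le a<b<c<d$. Then $c>3.88\,a$ and $d>4.89\,c$.
   Context: A set of positive integers $S$ has the property $D(n)$ if $xy+n$ is a perfect square for all distinct $x,y\in S$. *)

(* Defs.v *)
From Stdlib Require Import ZArith List.
Open Scope Z_scope.

Definition is_square (z : Z) : Prop := exists m : Z, z = m * m.

Definition has_property_D (n : Z) (S : list Z) : Prop :=
  (forall x, In x S -> 0 < x) /\
  (forall x y, In x S -> In y S -> x <> y -> is_square (x * y + n)).

(* Main.v *)
Require Import Defs.
From Stdlib Require Import ZArith List Lia.
Open Scope Z_scope.
Lemma tripleT (n x y z r s t : Z) :
  (n <= -2 \/ 2 <= n) -> n*n <= x -> x < y -> y < z ->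
  0 <= r -> 0 <= s -> 0 <= t ->
  x*y+n = r*r -> x*z+n = s*s -> y*z+n = t*t ->
  0 <= (z-x-y)*(z-x-y) - 4*(x*y+n) /\
  (0 < (z-x-y)*(z-x-y) - 4*(x*y+n) ->
     2*(n*(x+y+z)+2*x*y*z) - 1 <= n*n*((z-x-y)*(z-x-y) - 4*(x*y+n))).
Proof.
  intros Hn Hx Hxy Hyz Hr Hs Ht Er Es Et.
  assert (Hb : 2*n <= x /\ -x <= 2*n) by (split; nia).
  set (Q := (z-x-y)*(z-x-y) - 4*(x*y+n)).
  set (X := n*(x+y+z)+2*x*y*z).
  assert (HX1 : 2*n*(x+y+z) >= -(x*(x+y+z))).
  { assert (0 <= (x+2*n)*(x+y+z)) by (apply Z.mul_nonneg_nonneg; lia). lia. }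
  assert (HX2 : 0 < x*z*(y-2)) by (apply Z.mul_pos_pos; [apply Z.mul_pos_pos|]; lia).
  assert (HX : X > 0).
  { unfold X. assert (x*z*(y-2) = x*z*y - 2*(x*z)) by ring.
    assert (x*(x+y+z) <= 3*(x*z)). { assert (x*x <= x*z) by (apply Z.mul_le_mono_nonneg_l; lia).
      assert (x*y <= x*z) by (apply Z.mul_le_mono_nonneg_l; lia). lia. }
    nia. }
  set (e := X - 2*(r*s*t)).
  assert (Hrst : 0 <= r*s*t) by (apply Z.mul_nonneg_nonneg; [apply Z.mul_nonneg_nonneg|]; lia).
  assert (Hid : e*(2*X - e) = n*n*Q).
  { transitivity (X*X - 4*((r*r)*(s*s)*(t*t))). unfold e; ring.
    rewrite <- Er, <- Es, <- Et. unfold Q, X. ring. }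
  assert (Hp : 2*X - e > 0) by (unfold e; lia).
  clearbody e.
  destruct (Z.lt_trichotomy Q 0) as [HQ|[HQ|HQ]].
  - exfalso.
    assert (He : e < 0).
    { destruct (Z.lt_ge_cases e 0) as [h|h]; auto.
      assert (0 <= e*(2*X-e)) by (apply Z.mul_nonneg_nonneg; lia).
      assert (n*n*Q < 0) by (apply Z.mul_pos_neg; nia). lia. }
    assert (H1 : 2*X + 1 <= - (n*n*Q)).
    { assert (0 <= (-e-1)*(2*X-e)) by (apply Z.mul_nonneg_nonneg; lia).
      assert ((-e-1)*(2*X-e) = -(e*(2*X-e)) - (2*X-e)) by ring. lia. }
    assert (Sq : 0 <= (z-x-y)*(z-x-y)) by (apply Z.square_nonneg).
    assert (H2 : -Q <= 4*(x*y+n)) by (unfold Q; lia).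
    assert (Nn : 0 <= n*n) by (apply Z.square_nonneg).
    assert (H3 : - (n*n*Q) <= n*n*(4*(x*y+n))).
    { assert (0 <= n*n*(4*(x*y+n)+Q)) by (apply Z.mul_nonneg_nonneg; unfold Q; lia).
      assert (n*n*(4*(x*y+n)+Q) = n*n*(4*(x*y+n)) + n*n*Q) by ring. lia. }
    assert (H4 : 4*(n*n*n) <= 2*(x*x)).
    { destruct Hn as [hn|hn].
      - assert (n*n*n <= 0). { assert (0 <= n*n*(-n)) by (apply Z.mul_nonneg_nonneg; lia).
          assert (n*n*(-n) = -(n*n*n)) by ring. lia. }
        assert (0 <= x*x) by (apply Z.square_nonneg). lia.
      - assert (n*n*(2*n) <= x*x) by (apply Z.mul_le_mono_nonneg; lia).
        assert (n*n*(2*n) = 2*(n*n*n)) by ring. lia. }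
    assert (H5 : x*y*(n*n) <= x*y*x) by (apply Z.mul_le_mono_nonneg_l; [apply Z.mul_nonneg_nonneg|]; lia).
    assert (H7 : 0 <= x*y*(z-x-2)) by (apply Z.mul_nonneg_nonneg; [apply Z.mul_nonneg_nonneg|]; lia).
    assert (H8 : 0 <= x*(z-x-2)) by (apply Z.mul_nonneg_nonneg; lia).
    assert (H9 : x*(x+y+z) <= 3*(x*z)). { assert (x*x <= x*z) by (apply Z.mul_le_mono_nonneg_l; lia).
      assert (x*y <= x*z) by (apply Z.mul_le_mono_nonneg_l; lia). lia. }
    assert (H10 : x*y*z - x*y*x - x*y*2 = x*y*(z-x-2)) by ring.
    assert (H11 : x*(z-x-2) = x*z - x*x - 2*x) by ring.
    assert (H12 : x*x < x*y) by (apply Z.mul_lt_mono_pos_l; lia).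
    unfold X in H1. assert (HH: n*n*(4*(x*y+n)) = 4*(x*y*(n*n)) + 4*(n*n*n)) by ring.
    assert (H13 : 0 <= x*(z-x-2)*(4*y-3)) by (apply Z.mul_nonneg_nonneg; lia).
    assert (H14 : x*(x + 1) <= x*y) by (apply Z.mul_le_mono_nonneg_l; lia).
    Timeout 60 lia.
  - split; lia.
  - split; [lia|]. intros _.
    assert (He : e > 0).
    { destruct (Z.lt_ge_cases 0 e) as [h|h]; [lia|].
      assert (e*(2*X-e) <= 0) by (apply Z.mul_nonpos_nonneg; lia).
      assert (0 < n*n*Q) by (apply Z.mul_pos_pos; nia). lia. }
    assert (0 <= (e-1)*(2*X-e-1)) by (apply Z.mul_nonneg_nonneg; lia).
    assert ((e-1)*(2*X-e-1) = e*(2*X-e) - 2*X + 1) by ring. lia.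
Qed.


Lemma sqpos z : is_square z -> exists r, 0 <= r /\ z = r*r.
Proof. intros [m Hm]. exists (Z.abs m). split; [lia|]. rewrite Hm. nia. Qed.

Lemma Wbound (k w c d : Z) : 0 < k -> k < c -> c < d -> 100*d <= 489*c ->
  (d-w-c)*(d-w-c) <= 4*c*d \/ w >= c \/ w <= 0.
Proof. intros. destruct (Z.le_gt_cases w 0); [right;right;lia|].
  destruct (Z.le_gt_cases c w); [right;left;lia|]. left.
  destruct (Z.le_gt_cases 0 (d-w-c)); nia. Qed.

Theorem lemma5 (n a b c d : Z) :
  Z.abs n <> 1 -> n <> 0 ->
  has_property_D n (a :: b :: c :: d :: nil) ->
  n * n <= a -> a < b -> b < c -> c < d ->
  100 * c > 388 * a /\ 100 * d > 489 * c.
Proof.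
  intros H1 H0 [Hpos HD] Ha Hab Hbc Hcd.
  assert (Hn : n <= -2 \/ 2 <= n) by lia.
  assert (Ha0 : 0 < a) by (apply Hpos; simpl; tauto).
  destruct (sqpos _ (HD a b ltac:(simpl;tauto) ltac:(simpl;tauto) ltac:(lia))) as [r1 [P1 E1]].
  destruct (sqpos _ (HD a c ltac:(simpl;tauto) ltac:(simpl;tauto) ltac:(lia))) as [r2 [P2 E2]].
  destruct (sqpos _ (HD b c ltac:(simpl;tauto) ltac:(simpl;tauto) ltac:(lia))) as [r3 [P3 E3]].
  destruct (sqpos _ (HD a d ltac:(simpl;tauto) ltac:(simpl;tauto) ltac:(lia))) as [r4 [P4 E4]].
  destruct (sqpos _ (HD b d ltac:(simpl;tauto) ltac:(simpl;tauto) ltac:(lia))) as [r5 [P5 E5]].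
  destruct (sqpos _ (HD c d ltac:(simpl;tauto) ltac:(simpl;tauto) ltac:(lia))) as [r6 [P6 E6]].
  assert (Hb2 : 2*n <= a /\ -a <= 2*n) by (split; nia).
  assert (Ha4 : 4 <= a) by nia.
  split.
  - destruct (tripleT n a b c r1 r2 r3 Hn Ha Hab Hbc P1 P2 P3 E1 E2 E3) as [Q _].
    assert (a*(a+1) <= a*b) by (apply Z.mul_le_mono_nonneg_l; lia).
    assert (Aq : 0 <= a*a) by (apply Z.square_nonneg).
    assert (2*a <= c-a-b); [|lia].
    destruct (Z.le_gt_cases (2*a) (c-a-b)) as [h|h]; auto. exfalso.
    destruct (Z.le_gt_cases 0 (c-a-b)) as [h'|h'].
    + assert ((c-a-b)*(c-a-b) < (2*a)*(2*a)) by (apply Z.mul_lt_mono_nonneg; lia). lia.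
    + assert ((-(c-a-b))*(-(c-a-b)) < a*a) by (apply Z.mul_lt_mono_nonneg; lia).
      assert ((-(c-a-b))*(-(c-a-b)) = (c-a-b)*(c-a-b)) by ring. lia.
  - destruct (Z.le_gt_cases (100*d) (489*c)) as [Hc|]; [exfalso|lia].
    destruct (tripleT n b c d r3 r5 r6 Hn ltac:(lia) Hbc Hcd P3 P5 P6 E3 E5 E6) as [Qb Qb'].
    destruct (tripleT n a c d r2 r4 r6 Hn Ha ltac:(lia) Hcd P2 P4 P6 E2 E4 E6) as [Qa Qa'].
    destruct (Z.lt_ge_cases 0 ((d-b-c)*(d-b-c) - 4*(b*c+n))) as [Hq|Hq].
    + specialize (Qb' Hq).
      assert (Hk : n*n*((d-b-c)*(d-b-c) - 4*(b*c+n)) <= b*((d-b-c)*(d-b-c) - 4*(b*c+n)))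
        by (apply Z.mul_le_mono_nonneg_r; lia).
      destruct (Wbound a b c d ltac:(lia) ltac:(lia) Hcd Hc) as [W|[W|W]]; try lia.
      assert (b*((d-b-c)*(d-b-c)) <= b*(4*c*d)) by (apply Z.mul_le_mono_nonneg_l; lia).
      assert (L1 : 2*n*(b+c+d) >= -(b*(b+c+d))).
      { assert (0 <= (b+2*n)*(b+c+d)) by (apply Z.mul_nonneg_nonneg; lia). lia. }
      assert (L2 : 4*b*n >= -(2*(b*b))) by (assert (0 <= b*(b+2*n)) by (apply Z.mul_nonneg_nonneg; lia); lia).
      assert (L3 : b*(b+c+d) <= b*(7*c)) by (apply Z.mul_le_mono_nonneg_l; lia).
      assert (L4 : b*b < b*c) by (apply Z.mul_lt_mono_pos_l; lia).
      assert (L5 : 0 <= (b-5)*(b*c)) by (apply Z.mul_nonneg_nonneg; [|apply Z.mul_nonneg_nonneg]; lia).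
      assert (L6 : 0 <= b*b) by (apply Z.square_nonneg).
      assert (L7 : b*((0)) = 0) by ring.
      Timeout 60 lia.
    + destruct (Z.lt_ge_cases 0 ((d-a-c)*(d-a-c) - 4*(a*c+n))) as [Hq'|Hq'].
      * specialize (Qa' Hq').
        assert (Hk : n*n*((d-a-c)*(d-a-c) - 4*(a*c+n)) <= a*((d-a-c)*(d-a-c) - 4*(a*c+n)))
          by (apply Z.mul_le_mono_nonneg_r; lia).
        destruct (Wbound a a c d ltac:(lia) ltac:(lia) Hcd Hc) as [W|[W|W]]; try lia.
        assert (a*((d-a-c)*(d-a-c)) <= a*(4*c*d)) by (apply Z.mul_le_mono_nonneg_l; lia).
        assert (L1 : 2*n*(a+c+d) >= -(a*(a+c+d))).
        { assert (0 <= (a+2*n)*(a+c+d)) by (apply Z.mul_nonneg_nonneg; lia). lia. }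
        assert (L2 : 4*a*n >= -(2*(a*a))) by (assert (0 <= a*(a+2*n)) by (apply Z.mul_nonneg_nonneg; lia); lia).
        assert (L3 : a*(a+c+d) <= a*(7*c)) by (apply Z.mul_le_mono_nonneg_l; lia).
        assert (L4 : a*a < a*c) by (apply Z.mul_lt_mono_pos_l; lia).
        assert (L5 : 0 <= (a-4)*(a*c)) by (apply Z.mul_nonneg_nonneg; [|apply Z.mul_nonneg_nonneg]; lia).
        assert (L6 : 0 <= a*a) by (apply Z.square_nonneg).
        assert (L7 : a*((0)) = 0) by ring.
        Timeout 60 lia.
      * assert (Eb : (d-b-c)*(d-b-c) = 4*(b*c+n)) by lia.
        assert (Ea : (d-a-c)*(d-a-c) = 4*(a*c+n)) by lia.
        assert (Pb : 0 <= d-b-c).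
        { destruct (Z.le_gt_cases 0 (d-b-c)) as [h|h]; auto. exfalso.
          assert ((-(d-b-c))*(-(d-b-c)) < b*b) by (apply Z.mul_lt_mono_nonneg; lia).
          assert (b*b < b*c) by (apply Z.mul_lt_mono_pos_l; lia).
          assert ((-(d-b-c))*(-(d-b-c)) = (d-b-c)*(d-b-c)) by ring.
          assert (b*1 <= b*c) by (apply Z.mul_le_mono_nonneg_l; lia).
          lia. }
        assert (c*b > c*a) by (apply Z.lt_gt, Z.mul_lt_mono_pos_l; lia).
        assert ((d-b-c)*(d-b-c) < (d-a-c)*(d-a-c)) by (apply Z.mul_lt_mono_nonneg; lia).
        lia.
Qed.
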